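(* Let $\vec w\in\mathbb R^n$ be $\tau$-regular with $\sum_i (w^{(i)})^2=1$, let $\gamma\in(0,1]$, and let $\mathcal D$ be any distribution on $\{0,1\}^n$. Let $\vec y$ be drawn from the $\gamma$-noisy version $\tilde{\mathcal D}$ of $\mathcal D$. Then for every interval $[a,b]$, $$\Pr\big[\langle \vec w,\vec y\rangle\in[a,b]\big]\le \frac{4|b-a|}{\sqrt\gamma}+\frac{4\tau}{\sqrt\gamma}+2e^{-\gamma^2/(2\tau^2)}.$$
   Context: A vector $\vec w\in\mathbb R^n$ is $\tau$-regular if $\max_i|w^{(i)}|\le \tau\|\vec w\|_2$. For a distribution $\mathcal D$ on $\{0,1\}^n$ and $\gamma\in[0,1]$, the $\gamma$-noisy version $\tilde{\mathcal D}$ is the distribution of $\vec y$ obtained by sampling $\vec x\sim\mathcal D$ and then, independently for each coordinate $i$, setting $y^{(i)}=x^{(i)}$ with probability $1-\gamma$ and $y^{(i)}=$ a fresh uniformly random bit with probability $\gamma$. *)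

(* Defs.v *)
From Stdlib Require Import Reals List.
Import ListNotations.
Open Scope R_scope.

Definition sumR (l : list R) : R := fold_right Rplus 0 l.

(* All vectors in {0,1}^n, each represented as a list of n booleans
   (coordinate i = nth i v false; true = 1, false = 0). *)
Fixpoint bitvecs (n : nat) : list (list bool) :=
  match n with
  | O => [[]]
  | S m => flat_map (fun v => [false :: v; true :: v]) (bitvecs m)
  end.

Definition b2R (b : bool) : R := if b then 1 else 0.

Definition dot (w : nat -> R) (y : list bool) : R :=
  sumR (map (fun i => w i * b2R (nth i y false)) (seq 0 (length y))).

Definition sqnorm (n : nat) (w : nat -> R) : R :=
  sumR (map (fun i => w i ^ 2) (seq 0 n)).

Definition regular (n : nat) (tau : R) (w : nat -> R) : Prop :=
  forall i, (i < n)%nat -> Rabs (w i) <= tau * sqrt (sqnorm n w).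

Definition is_distr (n : nat) (D : list bool -> R) : Prop :=
  (forall x, In x (bitvecs n) -> 0 <= D x) /\ sumR (map D (bitvecs n)) = 1.

(* Transition probability P[y | x] of the gamma-noise process: each coordinate
   independently is kept w.p. 1-gamma, or replaced by a uniform bit w.p. gamma;
   hence y_i = x_i w.p. (1-gamma) + gamma/2 and y_i <> x_i w.p. gamma/2. *)
Definition noise_kernel (gamma : R) (x y : list bool) : R :=
  fold_right Rmult 1
    (map (fun p : bool * bool =>
            if Bool.eqb (fst p) (snd p) then (1 - gamma) + gamma / 2 else gamma / 2)
         (combine x y)).

Definition noisy (n : nat) (gamma : R) (D : list bool -> R) (y : list bool) : R :=
  sumR (map (fun x => D x * noise_kernel gamma x y) (bitvecs n)).

Definition prob_in_interval (n : nat) (mu : list bool -> R) (w : nat -> R) (a b : R) : R :=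
  sumR (map (fun y => if Rle_dec a (dot w y) then
                        if Rle_dec (dot w y) b then mu y else 0
                      else 0) (bitvecs n)).

(* Main.v *)
Require Import Defs.
From Stdlib Require Import Reals List Lra Lia Psatz.
Import ListNotations.
Open Scope R_scope.

Lemma sumR_app l1 l2 : sumR (l1 ++ l2) = sumR l1 + sumR l2.
Proof. induction l1; simpl; [ring| rewrite IHl1; ring]. Qed.

Lemma sumR_plus {A} (f g : A -> R) l :
  sumR (map (fun x => f x + g x) l) = sumR (map f l) + sumR (map g l).
Proof. induction l; simpl; [ring| rewrite IHl; ring]. Qed.

Lemma sumR_scal {A} (k : R) (f : A -> R) l :
  sumR (map (fun x => k * f x) l) = k * sumR (map f l).
Proof. induction l; simpl; [ring| rewrite IHl; ring]. Qed.

Lemma sumR_ext_in {A} (f g : A -> R) l :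
  (forall x, In x l -> f x = g x) -> sumR (map f l) = sumR (map g l).
Proof. intros H; rewrite (map_ext_in f g l H); reflexivity. Qed.

Lemma sumR_mono_in {A} (f g : A -> R) l :
  (forall x, In x l -> f x <= g x) -> sumR (map f l) <= sumR (map g l).
Proof.
  induction l; simpl; intros H; [lra|].
  apply Rplus_le_compat; [apply H; auto| apply IHl; auto].
Qed.

Lemma sumR_swap {A B} (F : A -> B -> R) (X : list A) (Y : list B) :
  sumR (map (fun y => sumR (map (fun x => F x y) X)) Y)
  = sumR (map (fun x => sumR (map (fun y => F x y) Y)) X).
Proof.
  induction Y; simpl.
  - induction X; simpl; [reflexivity| rewrite <- IHX; ring].
  - rewrite IHY. rewrite <- sumR_plus. reflexivity.
Qed.

Lemma sumR_flat_map {A B} (F : B -> R) (g : A -> list B) l :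
  sumR (map F (flat_map g l)) = sumR (map (fun v => sumR (map F (g v))) l).
Proof. induction l; simpl; [reflexivity|]. rewrite map_app, sumR_app, IHl; reflexivity. Qed.

Lemma sum_bv_S (F : list bool -> R) m :
  sumR (map F (bitvecs (S m))) = sumR (map (fun v => F (false :: v) + F (true :: v)) (bitvecs m)).
Proof.
  simpl bitvecs. rewrite sumR_flat_map. apply sumR_ext_in. intros; simpl; ring.
Qed.

Lemma bitvecs_length n x : In x (bitvecs n) -> length x = n.
Proof.
  revert x; induction n; simpl; intros x H.
  - destruct H as [<-|[]]; reflexivity.
  - apply in_flat_map in H. destruct H as [v [Hv H]].
    simpl in H. destruct H as [<-|[<-|[]]]; simpl; rewrite (IHn v Hv); reflexivity.
Qed.

Lemma dot_nil w : dot w [] = 0.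
Proof. reflexivity. Qed.

Lemma map_seq_S (g : nat -> R) m :
  map g (seq 1 m) = map (fun i => g (S i)) (seq 0 m).
Proof. rewrite <- seq_shift, map_map. reflexivity. Qed.

Lemma dot_cons w c y : dot w (c :: y) = w 0%nat * b2R c + dot (fun i => w (S i)) y.
Proof.
  unfold dot. simpl length. rewrite <- cons_seq. simpl map. simpl sumR.
  f_equal. rewrite map_seq_S. apply sumR_ext_in. intros i Hi. simpl nth. reflexivity.
Qed.

Fixpoint Eu (u : list R) (F : R -> R) : R :=
  match u with
  | [] => F 0
  | x :: u' => (Eu u' (fun t => F (t + x / 2)) + Eu u' (fun t => F (t - x / 2))) / 2
  end.

Definition sumsq (u : list R) : R := sumR (map (fun x => x ^ 2) u).
Lemma sumsq_cons x u : sumsq (x :: u) = x ^ 2 + sumsq u.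
Proof. reflexivity. Qed.

Lemma Eu_ext u : forall F G, (forall t, F t = G t) -> Eu u F = Eu u G.
Proof.
  induction u as [|x u IH]; intros F G H; simpl; [apply H|].
  rewrite (IH (fun t => F (t + x/2)) (fun t => G (t + x/2))) by (intros; apply H).
  rewrite (IH (fun t => F (t - x/2)) (fun t => G (t - x/2))) by (intros; apply H).
  reflexivity.
Qed.

Lemma Eu_lin u : forall k1 k2 F G,
  Eu u (fun t => k1 * F t + k2 * G t) = k1 * Eu u F + k2 * Eu u G.
Proof.
  induction u as [|x u IH]; intros; simpl; [reflexivity|].
  rewrite (IH k1 k2 (fun t => F (t + x/2)) (fun t => G (t + x/2))).
  rewrite (IH k1 k2 (fun t => F (t - x/2)) (fun t => G (t - x/2))). field.
Qed.

Lemma Eu_const u : forall k, Eu u (fun _ => k) = k.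
Proof. induction u as [|x u IH]; intros; simpl; [reflexivity| rewrite !IH; field]. Qed.

Lemma Eu_mono u : forall F G, (forall t, F t <= G t) -> Eu u F <= Eu u G.
Proof.
  induction u as [|x u IH]; intros F G H; simpl; [apply H|].
  assert (H1 := IH (fun t => F (t + x/2)) (fun t => G (t + x/2)) (fun t => H _)).
  assert (H2 := IH (fun t => F (t - x/2)) (fun t => G (t - x/2)) (fun t => H _)).
  lra.
Qed.

Lemma Eu_sq u : forall al, Eu u (fun t => (al + t) ^ 2) = al ^ 2 + sumsq u / 4.
Proof.
  induction u as [|x u IH]; intros; cbn [Eu].
  - unfold sumsq; simpl; field.
  - rewrite (Eu_ext u (fun t => (al + (t + x/2))^2) (fun t => ((al + x/2) + t)^2)) by (intros; f_equal; ring).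
    rewrite (Eu_ext u (fun t => (al + (t - x/2))^2) (fun t => ((al - x/2) + t)^2)) by (intros; f_equal; ring).
    rewrite !IH, sumsq_cons. field.
Qed.

Fixpoint Eb (g : R) (ws : list (R * R)) (Phi : R -> list R -> R) : R :=
  match ws with
  | [] => Phi 0 []
  | p :: r => (1 - g) * Eb g r (fun c u => Phi (c + fst p * snd p) u)
              + g * Eb g r (fun c u => Phi (c + fst p / 2) (fst p :: u))
  end.

Lemma Eb_ext g ws : forall P Q, (forall c u, P c u = Q c u) -> Eb g ws P = Eb g ws Q.
Proof.
  induction ws as [|p r IH]; intros P Q H; simpl; [apply H|].
  rewrite (IH (fun c u => P (c + fst p * snd p) u) (fun c u => Q (c + fst p * snd p) u)) by (intros; apply H).
  rewrite (IH (fun c u => P (c + fst p / 2) (fst p :: u)) (fun c u => Q (c + fst p / 2) (fst p :: u))) by (intros; apply H).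
  reflexivity.
Qed.

Lemma Eb_lin g ws : forall k1 k2 P Q,
  Eb g ws (fun c u => k1 * P c u + k2 * Q c u) = k1 * Eb g ws P + k2 * Eb g ws Q.
Proof.
  induction ws as [|p r IH]; intros; simpl; [reflexivity|].
  rewrite (IH k1 k2 (fun c u => P (c + fst p * snd p) u) (fun c u => Q (c + fst p * snd p) u)).
  rewrite (IH k1 k2 (fun c u => P (c + fst p / 2) (fst p :: u)) (fun c u => Q (c + fst p / 2) (fst p :: u))).
  ring.
Qed.

Lemma Eb_const g ws : forall k, Eb g ws (fun _ _ => k) = k.
Proof. induction ws as [|p r IH]; intros; simpl; [reflexivity| rewrite !IH; ring]. Qed.

Lemma Eb_mono g ws (Pr : R -> Prop) : 0 <= g <= 1 ->
  Forall (fun p => Pr (fst p)) ws ->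
  forall P Q, (forall c u, Forall Pr u -> P c u <= Q c u) -> Eb g ws P <= Eb g ws Q.
Proof.
  intros Hg; induction ws as [|p r IH]; intros HF P Q H; simpl.
  - apply H; constructor.
  - inversion HF; subst.
    assert (H1 := IH H3 (fun c u => P (c + fst p * snd p) u) (fun c u => Q (c + fst p * snd p) u) (fun c u Hu => H _ _ Hu)).
    assert (H4 : forall c u, Forall Pr u -> P (c + fst p / 2) (fst p :: u) <= Q (c + fst p / 2) (fst p :: u))
      by (intros; apply H; constructor; auto).
    assert (H5 := IH H3 _ _ H4).
    apply Rplus_le_compat; apply Rmult_le_compat_l; lra.
Qed.

Definition S2 (ws : list (R * R)) := sumR (map (fun p => fst p ^ 2) ws).
Definition S4 (ws : list (R * R)) := sumR (map (fun p => fst p ^ 4) ws).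

Lemma Eb_sq g ws : forall al,
  Eb g ws (fun c u => (al + sumsq u) ^ 2) = (al + g * S2 ws) ^ 2 + g * (1 - g) * S4 ws.
Proof.
  induction ws as [|p r IH]; intros; cbn [Eb].
  - unfold S2, S4, sumsq; simpl; ring.
  - rewrite IH.
    rewrite (Eb_ext g r _ (fun c u => ((al + fst p ^ 2) + sumsq u) ^ 2)) by (intros; rewrite sumsq_cons; f_equal; ring).
    rewrite IH. unfold S2, S4; simpl. ring.
Qed.

Definition ind (a b z : R) : R := if Rle_dec a z then if Rle_dec z b then 1 else 0 else 0.

Lemma ind_01 a b z : 0 <= ind a b z <= 1.
Proof. unfold ind; destruct Rle_dec; [destruct Rle_dec|]; lra. Qed.

Section F.
Variables (a b tau : R).
Hypothesis Htau : 0 <= tau.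
Definition MM := Rabs (b - a) / 2 + tau.
Definition mm := (a + b) / 2.
Definition ff (z : R) : R :=
  if Rle_dec (z - mm) (- MM) then - MM else if Rle_dec (z - mm) MM then z - mm else MM.

Lemma MM_pos : 0 <= MM.
Proof. unfold MM; pose proof (Rabs_pos (b - a)); lra. Qed.

Lemma ff_mono z1 z2 : z1 <= z2 -> ff z1 <= ff z2.
Proof.
  pose proof MM_pos. unfold ff; intros;
  repeat destruct Rle_dec; lra.
Qed.

Lemma ff_bound z : Rabs (ff z) <= MM.
Proof.
  pose proof MM_pos. unfold ff; repeat destruct Rle_dec; apply Rabs_le; lra.
Qed.

Lemma ff_lin z : a <= b -> a - tau <= z <= b + tau -> ff z = z - mm.
Proof.
  intros Hab Hz. unfold ff, MM, mm in *. rewrite Rabs_right by lra.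
  repeat destruct Rle_dec; lra.
Qed.

Lemma key_pt x z : Rabs x <= tau ->
  x / 2 * (ff (z + x / 2) - ff (z - x / 2)) >= x ^ 2 / 4 * (ind a b (z + x / 2) + ind a b (z - x / 2)).
Proof.
  intros Hx. assert (Hx2 : - tau <= x <= tau) by (split; [pose proof (Rle_abs (-x)); rewrite Rabs_Ropp in *|pose proof (Rle_abs x)]; lra); clear Hx.
  destruct (Rle_dec a (z + x/2)) as [h1|h1]; destruct (Rle_dec (z + x/2) b) as [h2|h2];
  destruct (Rle_dec a (z - x/2)) as [h3|h3]; destruct (Rle_dec (z - x/2) b) as [h4|h4];
  unfold ind; repeat (destruct Rle_dec; try lra);
  try (rewrite (ff_lin (z + x/2)), (ff_lin (z - x/2)) by lra; nra).
  all: destruct (Rle_dec 0 x);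
    [ pose proof (ff_mono (z - x/2) (z + x/2)); nra
    | pose proof (ff_mono (z + x/2) (z - x/2)); nra ].
Qed.

Lemma stein u : Forall (fun x => Rabs x <= tau) u -> forall c,
  Eu u (fun t => t * ff (c + t)) >= sumsq u / 4 * Eu u (fun t => ind a b (c + t)).
Proof.
  induction u as [|x u IH]; intros HF c; cbn [Eu].
  - unfold sumsq; simpl; lra.
  - inversion HF as [|? ? Hx Hu]; subst.
    rewrite (Eu_ext u (fun t => (t + x/2) * ff (c + (t + x/2)))
        (fun t => 1 * (t * ff ((c + x/2) + t)) + (x/2) * ff ((c + x/2) + t)))
      by (intros; replace (c + (t + x/2)) with (c + x/2 + t) by ring; ring).
    rewrite (Eu_ext u (fun t => (t - x/2) * ff (c + (t - x/2)))
        (fun t => 1 * (t * ff ((c - x/2) + t)) + (- (x/2)) * ff ((c - x/2) + t)))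
      by (intros; replace (c + (t - x/2)) with (c - x/2 + t) by ring; ring).
    rewrite (Eu_ext u (fun t => ind a b (c + (t + x/2))) (fun t => ind a b ((c + x/2) + t)))
      by (intros; f_equal; ring).
    rewrite (Eu_ext u (fun t => ind a b (c + (t - x/2))) (fun t => ind a b ((c - x/2) + t)))
      by (intros; f_equal; ring).
    rewrite !Eu_lin.
    assert (K : Eu u (fun t => x/2 * ff (c + x/2 + t) + (- (x/2)) * ff (c - x/2 + t))
              >= Eu u (fun t => x^2/4 * ind a b (c + x/2 + t) + x^2/4 * ind a b (c - x/2 + t))).
    { apply Rle_ge, Eu_mono. intros t.
      pose proof (key_pt x (c + t) Hx).
      replace (c + x/2 + t) with (c + t + x/2) by ring.
      replace (c - x/2 + t) with (c + t - x/2) by ring. lra. }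
    rewrite !Eu_lin in K.
    pose proof (IH Hu (c + x/2)). pose proof (IH Hu (c - x/2)).
    rewrite sumsq_cons. lra.
Qed.

Lemma upper u c : 0 < sumsq u ->
  Eu u (fun t => t * ff (c + t)) <= MM * sqrt (sumsq u / 4).
Proof.
  intros Hq. set (s := sqrt (sumsq u / 4)).
  assert (Hs : 0 < s) by (apply sqrt_lt_R0; lra).
  assert (Hss : s * s = sumsq u / 4) by (apply sqrt_sqrt; lra).
  pose proof MM_pos.
  apply Rle_trans with (Eu u (fun t => (MM / (2 * s)) * (0 + t) ^ 2 + (MM * s / 2) * 1)).
  - apply Eu_mono. intros t.
    assert (H1 : t * ff (c + t) <= Rabs t * MM).
    { apply Rle_trans with (Rabs (t * ff (c + t))); [apply Rle_abs|].
      rewrite Rabs_mult. apply Rmult_le_compat_l; [apply Rabs_pos| apply ff_bound]. }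
    assert (E : MM / (2 * s) * (0 + t) ^ 2 + MM * s / 2 * 1 - Rabs t * MM
                = MM / (2 * s) * (Rabs t - s) ^ 2).
    { rewrite Rplus_0_l, <- (pow2_abs t). field. lra. }
    assert (0 <= MM / (2 * s) * (Rabs t - s) ^ 2).
    { apply Rmult_le_pos; [apply Rle_mult_inv_pos; lra| apply pow2_ge_0]. }
    lra.
  - rewrite Eu_lin, Eu_sq, Eu_const. rewrite <- Hss. right. field. lra.
Qed.

Lemma inner_bound u c g : Forall (fun x => Rabs x <= tau) u -> 0 < g ->
  g / 2 <= sumsq u ->
  Eu u (fun t => ind a b (c + t)) * sqrt g <= 3 * MM.
Proof.
  intros HF Hg Hq.
  set (p := Eu u (fun t => ind a b (c + t))).
  assert (Hp : 0 <= p) by (unfold p; rewrite <- (Eu_const u 0); apply Eu_mono; intros; apply ind_01).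
  set (s := sqrt (sumsq u / 4)).
  assert (Hs : 0 < s) by (apply sqrt_lt_R0; lra).
  assert (Hss : s * s = sumsq u / 4) by (apply sqrt_sqrt; lra).
  pose proof (stein u HF c) as H1. pose proof (upper u c ltac:(lra)) as H2. fold p s in H1, H2.
  assert (Hps : p * s <= MM).
  { rewrite <- Hss in H1. apply Rmult_le_reg_r with s; [lra|]. nra. }
  assert (Hg2 : sqrt g <= 3 * s).
  { pose proof (sqrt_pos g). assert (sqrt g * sqrt g = g) by (apply sqrt_sqrt; lra). nra. }
  pose proof MM_pos. nra.
Qed.
End F.

Fixpoint mkws (w : nat -> R) (x : list bool) : list (R * R) :=
  match x with
  | [] => []
  | c :: x' => (w 0%nat, b2R c) :: mkws (fun i => w (S i)) x'
  end.

Lemma kernel_cons g c x c' y :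
  noise_kernel g (c :: x) (c' :: y) =
  (if Bool.eqb c c' then (1 - g) + g / 2 else g / 2) * noise_kernel g x y.
Proof. reflexivity. Qed.

Lemma kernel_rep g x : forall (w : nat -> R) (G : R -> R),
  sumR (map (fun y => G (dot w y) * noise_kernel g x y) (bitvecs (length x)))
  = Eb g (mkws w x) (fun c u => Eu u (fun t => G (c + t))).
Proof.
  induction x as [|c x IH]; intros w G.
  - simpl. rewrite dot_nil. unfold noise_kernel; simpl. rewrite Rmult_1_r, !Rplus_0_r; reflexivity.
  - simpl length. rewrite sum_bv_S.
    rewrite (sumR_ext_in _ (fun y => (if Bool.eqb c false then (1 - g) + g / 2 else g / 2) *
               ((fun t => G (w 0%nat * b2R false + t)) (dot (fun i => w (S i)) y) * noise_kernel g x y)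
             + (if Bool.eqb c true then (1 - g) + g / 2 else g / 2) *
               ((fun t => G (w 0%nat * b2R true + t)) (dot (fun i => w (S i)) y) * noise_kernel g x y)))
      by (intros; rewrite !dot_cons, !kernel_cons; ring).
    rewrite sumR_plus, !sumR_scal.
    rewrite (IH (fun i => w (S i)) (fun t => G (w 0%nat * b2R false + t))).
    rewrite (IH (fun i => w (S i)) (fun t => G (w 0%nat * b2R true + t))).
    cbn [mkws Eb fst snd].
    set (sw := fun i => w (S i)).
    rewrite (Eb_ext g (mkws sw x) (fun c0 u => Eu (w 0%nat :: u) (fun t => G (c0 + w 0%nat / 2 + t)))
        (fun c0 u => /2 * Eu u (fun t => G (w 0%nat * b2R true + (c0 + t)))
                   + /2 * Eu u (fun t => G (w 0%nat * b2R false + (c0 + t))))).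
    2:{ intros c0 u. cbn [Eu].
        rewrite (Eu_ext u (fun t => G (c0 + w 0%nat / 2 + (t + w 0%nat / 2))) (fun t => G (w 0%nat * b2R true + (c0 + t))))
          by (intros; f_equal; unfold b2R; field).
        rewrite (Eu_ext u (fun t => G (c0 + w 0%nat / 2 + (t - w 0%nat / 2))) (fun t => G (w 0%nat * b2R false + (c0 + t))))
          by (intros; f_equal; unfold b2R; field).
        field. }
    rewrite Eb_lin.
    destruct c.
    + rewrite (Eb_ext g (mkws sw x) (fun c0 u => Eu u (fun t => G (c0 + w 0%nat * b2R true + t)))
          (fun c0 u => Eu u (fun t => G (w 0%nat * b2R true + (c0 + t)))))
        by (intros; apply Eu_ext; intros; f_equal; ring).
      simpl Bool.eqb; cbv iota; field.
    + rewrite (Eb_ext g (mkws sw x) (fun c0 u => Eu u (fun t => G (c0 + w 0%nat * b2R false + t)))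
          (fun c0 u => Eu u (fun t => G (w 0%nat * b2R false + (c0 + t)))))
        by (intros; apply Eu_ext; intros; f_equal; ring).
      simpl Bool.eqb; cbv iota; field.
Qed.

Lemma mkws_S2 x : forall w, S2 (mkws w x) = sumR (map (fun i => w i ^ 2) (seq 0 (length x))).
Proof.
  induction x as [|c x IH]; intros w; [reflexivity|].
  simpl length. rewrite <- cons_seq. unfold S2 in *. simpl. rewrite IH, map_seq_S. reflexivity.
Qed.

Lemma mkws_bound tau x : forall w, (forall i, (i < length x)%nat -> Rabs (w i) <= tau) ->
  Forall (fun p => Rabs (fst p) <= tau) (mkws w x).
Proof.
  induction x as [|c x IH]; intros w H; simpl; constructor.
  - apply H; simpl; lia.
  - apply IH. intros i Hi. apply H. simpl; lia.
Qed.

Lemma S4_le tau ws : Forall (fun p => Rabs (fst p) <= tau) ws -> S4 ws <= tau ^ 2 * S2 ws.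
Proof.
  induction ws as [|p r IH]; intros HF; unfold S4, S2 in *; cbn [sumR map fold_right]; [lra|].
  inversion HF; subst. specialize (IH H2).
  assert (fst p ^ 2 <= tau ^ 2).
  { rewrite <- (pow2_abs (fst p)). pose proof (Rabs_pos (fst p)). nra. }
  assert (fst p ^ 4 <= tau ^ 2 * fst p ^ 2).
  { replace (fst p ^ 4) with (fst p ^ 2 * fst p ^ 2) by ring.
    apply Rmult_le_compat_r; [apply pow2_ge_0| lra]. }
  unfold sumR in *. nra.
Qed.

Lemma sumsq_nonneg u : 0 <= sumsq u.
Proof. induction u; [unfold sumsq; simpl; lra| rewrite sumsq_cons; pose proof (pow2_ge_0 a); lra]. Qed.

Lemma arith (P X tau g e : R) : 0 < g -> 0 <= X -> 0 <= tau -> 0 < e -> P <= 1 ->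
  P <= 3 * (X / 2 + tau) / sqrt g + 4 * tau ^ 2 / g ->
  P <= 4 * X / sqrt g + 4 * tau / sqrt g + 2 * e.
Proof.
  intros Hg HX Ht He H1 H2.
  set (r := sqrt g) in *.
  assert (Hr : 0 < r) by (apply sqrt_lt_R0; lra).
  assert (Hrr : r * r = g) by (apply sqrt_sqrt; lra).
  set (q := tau / r). set (Y := X / r).
  assert (Hq : 0 <= q) by (unfold q; apply Rle_mult_inv_pos; lra).
  assert (HY : 0 <= Y) by (unfold Y; apply Rle_mult_inv_pos; lra).
  assert (E1 : 3 * (X / 2 + tau) / r + 4 * tau ^ 2 / g = 3/2 * Y + 3 * q + 4 * q ^ 2)
    by (unfold q, Y; rewrite <- Hrr; field; lra).
  assert (E2 : 4 * X / r + 4 * tau / r + 2 * e = 4 * Y + 4 * q + 2 * e)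
    by (unfold q, Y; field; lra).
  rewrite E1 in H2. rewrite E2.
  destruct (Rle_dec (1/4) q); nra.
Qed.

Lemma per_x n tau w g a b x :
  0 <= tau -> 0 < g <= 1 ->
  (forall i, (i < n)%nat -> Rabs (w i) <= tau) -> sqnorm n w = 1 ->
  In x (bitvecs n) ->
  sumR (map (fun y => ind a b (dot w y) * noise_kernel g x y) (bitvecs n))
    <= 4 * Rabs (b - a) / sqrt g + 4 * tau / sqrt g
       + 2 * exp (- (g ^ 2) / (2 * tau ^ 2)).
Proof.
  intros Ht Hg HW Hn Hx.
  pose proof (bitvecs_length _ _ Hx) as Hl. rewrite <- Hl.
  rewrite (kernel_rep g x w (ind a b)).
  assert (HF : Forall (fun p => Rabs (fst p) <= tau) (mkws w x)) by (apply mkws_bound; rewrite Hl; auto).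
  assert (HS2 : S2 (mkws w x) = 1) by (rewrite mkws_S2, Hl; exact Hn).
  assert (Hg' : 0 <= g <= 1) by lra.
  apply arith with (g := g); [lra| apply Rabs_pos| lra| apply exp_pos| |].
  - rewrite <- (Eb_const g (mkws w x) 1).
    apply (Eb_mono g _ (fun _ => True) Hg').
    + apply Forall_forall; auto.
    + intros c u _. rewrite <- (Eu_const u 1). apply Eu_mono. intros; apply ind_01.
  - apply Rle_trans with (Eb g (mkws w x) (fun c u => (3 * MM a b tau / sqrt g) * 1
                                   + (4 / g ^ 2) * (- g + sumsq u) ^ 2)).
    + apply (Eb_mono g _ (fun x => Rabs x <= tau) Hg' HF). intros c u Hu.
      assert (Hsg : 0 < sqrt g) by (apply sqrt_lt_R0; lra).
      pose proof (MM_pos a b tau Ht) as HM.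
      assert (H0 : 0 <= 4 / g ^ 2 * (- g + sumsq u) ^ 2).
      { apply Rmult_le_pos; [apply Rle_mult_inv_pos; [lra| apply pow_lt; lra]| apply pow2_ge_0]. }
      destruct (Rle_dec (g / 2) (sumsq u)) as [Hq|Hq].
      * pose proof (inner_bound a b tau Ht u c g Hu ltac:(lra) Hq) as HI.
        assert (Eu u (fun t => ind a b (c + t)) <= 3 * MM a b tau / sqrt g).
        { apply Rmult_le_reg_r with (sqrt g); [lra|]. unfold Rdiv. rewrite Rmult_assoc, Rinv_l; lra. }
        lra.
      * assert (Hp : Eu u (fun t => ind a b (c + t)) <= 1).
        { rewrite <- (Eu_const u 1). apply Eu_mono. intros; apply ind_01. }
        pose proof (sumsq_nonneg u).
        assert (Hbig : 1 <= 4 / g ^ 2 * (- g + sumsq u) ^ 2).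
        { assert (g ^ 2 / 4 <= (- g + sumsq u) ^ 2) by nra.
          apply Rmult_le_reg_r with (g ^ 2 / 4); [nra|].
          replace (4 / g ^ 2 * (- g + sumsq u) ^ 2 * (g ^ 2 / 4)) with ((- g + sumsq u) ^ 2) by (field; lra).
          lra. }
        assert (0 <= 3 * MM a b tau / sqrt g) by (apply Rle_mult_inv_pos; lra).
        lra.
    + rewrite Eb_lin, Eb_const, Eb_sq, HS2.
      pose proof (S4_le tau _ HF) as H4. rewrite HS2 in H4.
      unfold MM.
      assert (4 / g ^ 2 * ((- g + g * 1) ^ 2 + g * (1 - g) * S4 (mkws w x)) <= 4 * tau ^ 2 / g).
      { replace (4 / g ^ 2 * ((- g + g * 1) ^ 2 + g * (1 - g) * S4 (mkws w x)))
          with (4 * ((1 - g) * S4 (mkws w x)) / g) by (field; lra).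
        unfold Rdiv. apply Rmult_le_compat_r; [left; apply Rinv_0_lt_compat; lra|].
        assert (0 <= S4 (mkws w x)).
        { unfold S4. apply Rle_trans with (sumR (map (fun _ => 0) (mkws w x))).
          - clear. induction (mkws w x); simpl; lra.
          - apply sumR_mono_in. intros. replace (fst x0 ^ 4) with ((fst x0 ^ 2) ^ 2) by ring. apply pow2_ge_0. } 
        nra. }
      lra.
Qed.

Theorem lemma2p3 (n : nat) (tau : R) (w : nat -> R) (gamma : R)
  (D : list bool -> R) (a b : R) :
  regular n tau w ->
  sqnorm n w = 1 ->
  0 < gamma <= 1 ->
  is_distr n D ->
  prob_in_interval n (noisy n gamma D) w a b
    <= 4 * Rabs (b - a) / sqrt gamma + 4 * tau / sqrt gamma
       + 2 * exp (- (gamma ^ 2) / (2 * tau ^ 2)).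
Proof.
  intros Hreg Hn Hg [HD0 HD1].
  assert (HW : forall i, (i < n)%nat -> Rabs (w i) <= tau).
  { intros i Hi. pose proof (Hreg i Hi) as H. rewrite Hn, sqrt_1, Rmult_1_r in H. exact H. }
  assert (Ht : 0 <= tau).
  { destruct n as [|n]. { unfold sqnorm in Hn; simpl in Hn. lra. }
    pose proof (HW 0%nat ltac:(lia)). pose proof (Rabs_pos (w 0%nat)). lra. }
  set (RHS := 4 * Rabs (b - a) / sqrt gamma + 4 * tau / sqrt gamma
       + 2 * exp (- (gamma ^ 2) / (2 * tau ^ 2))).
  unfold prob_in_interval, noisy.
  rewrite (sumR_ext_in _ (fun y => sumR (map (fun x => D x * (ind a b (dot w y) * noise_kernel gamma x y)) (bitvecs n)))).
  2:{ intros y _. unfold ind.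
      destruct (Rle_dec a (dot w y)); [destruct (Rle_dec (dot w y) b)|].
      - apply sumR_ext_in; intros; ring.
      - rewrite (sumR_ext_in _ (fun x => 0 * (D x * noise_kernel gamma x y))) by (intros; ring).
        rewrite sumR_scal. ring.
      - rewrite (sumR_ext_in _ (fun x => 0 * (D x * noise_kernel gamma x y))) by (intros; ring).
        rewrite sumR_scal. ring. }
  rewrite sumR_swap.
  rewrite (sumR_ext_in _ (fun x => D x * sumR (map (fun y => ind a b (dot w y) * noise_kernel gamma x y) (bitvecs n))))
    by (intros; rewrite <- sumR_scal; reflexivity).
  apply Rle_trans with (sumR (map (fun x => D x * RHS) (bitvecs n))).
  - apply sumR_mono_in. intros x Hx. apply Rmult_le_compat_l; [apply HD0; auto|].
    apply per_x; auto.
  - rewrite (sumR_ext_in _ (fun x => RHS * D x)) by (intros; ring).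
    rewrite sumR_scal, HD1. lra.
Qed.
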